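(* Let $V$ be an $n$-dimensional vector space over a field $\mathbb{F}$ with an alternating bilinear form $\mathsf{s}$ of maximal rank. Then the symplectic group $\mathrm{Sp}(V)$ acts flag-transitively on $\Gamma(V)$.
   Context: $\mathrm{Sp}(V)$ is the group of linear automorphisms of $V$ preserving $\mathsf{s}$. $\mathrm{Rad}(U)=U\cap U^\perp$; maximal rank means $\dim\mathrm{Rad}(V)\le1$. $\Gamma(V)$: for $i\in I=\{1,\dots,n-1\}$ the objects of type $i$ are the $i$-dimensional subspaces $U$ with $U\cap\mathrm{Rad}(V)=0$ and $\dim\mathrm{Rad}(U)\le1$; $X,Y$ are incident iff $X=Y$, or $X\subseteq Y$ with $X\cap\mathrm{Rad}(Y)=0$, or vice versa. A flag is a set of pairwise incident objects, its type is the set of types of its members. Flag-transitive: for every $J\subseteq I$ the group is transitive on the set of flags of type $J$. *)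

(* Defs.v *)
From HB Require Import structures.
From mathcomp Require Import all_boot all_order all_algebra.
Set Implicit Arguments. Unset Strict Implicit. Unset Printing Implicit Defensive.
Import GRing.Theory.
Local Open Scope ring_scope.

Section SymplecticGeometry.
Variables (F : fieldType) (vT : vectType F) (s : {biscalar vT}).

(* U^perp = { v | s u v = 0 for all u in U }; it suffices to test a basis of U.
   Each [s u] is linear, so [linfun (s u)] coincides with [s u]. *)
Definition perp (U : {vspace vT}) : {vspace vT} :=
  (\bigcap_(i < \dim U) lker (linfun (s (tnth (vbasis U) i) : vT -> F^o)))%VS.

Definition Rad (U : {vspace vT}) : {vspace vT} := (U :&: perp U)%VS.

Definition is_object_of_type (i : nat) (U : {vspace vT}) : Prop :=
  [/\ (1 <= i <= (\dim {:vT}).-1)%N, \dim U = i,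
      (U :&: Rad fullv)%VS = 0%VS & (\dim (Rad U) <= 1)%N].

Definition is_object (U : {vspace vT}) : Prop :=
  exists i, is_object_of_type i U.

Definition incident (X Y : {vspace vT}) : Prop :=
  [\/ X = Y,
      (X <= Y)%VS /\ (X :&: Rad Y)%VS = 0%VS
    | (Y <= X)%VS /\ (Y :&: Rad X)%VS = 0%VS].

Definition is_flag (P : {vspace vT} -> Prop) : Prop :=
  (forall X, P X -> is_object X) /\
  (forall X Y, P X -> P Y -> incident X Y).

Definition flag_has_type (P : {vspace vT} -> Prop) (J : nat -> Prop) : Prop :=
  forall i, J i <-> exists2 X, P X & is_object_of_type i X.

Definition in_Sp (g : 'End(vT)) : Prop :=
  [/\ lker g = 0%VS, limg g = fullv & forall u v, s (g u) (g v) = s u v].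

Definition flag_image (g : 'End(vT)) (P : {vspace vT} -> Prop) :
  {vspace vT} -> Prop := fun Y => exists2 X, P X & Y = (g @: X)%VS.

Definition Sp_flag_transitive : Prop :=
  forall J : nat -> Prop,
    (forall i, J i -> (1 <= i <= (\dim {:vT}).-1)%N) ->
    forall P Q, is_flag P -> flag_has_type P J ->
                is_flag Q -> flag_has_type Q J ->
    exists g, in_Sp g /\ (forall Y, flag_image g P Y <-> Q Y).

End SymplecticGeometry.

(* Main.v *)
Require Import Defs.
From HB Require Import structures.
From mathcomp Require Import all_boot all_order all_algebra zify.
From Stdlib Require Import Classical.
Set Implicit Arguments. Unset Strict Implicit. Unset Printing Implicit Defensive.
Import GRing.Theory.
Local Open Scope ring_scope.
Section S.
Variables (F : fieldType) (vT : vectType F) (s : {biscalar vT}).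
Lemma sDl u v w : s (u + v) w = s u w + s v w.
Proof. by rewrite linearDl. Qed.
Lemma sDr u v w : s w (u + v) = s w u + s w v.
Proof. by rewrite linearDr. Qed.
Lemma sZl a u w : s (a *: u) w = a * s u w.
Proof. by rewrite linearZl_LR. Qed.
Lemma sZr a u w : s w (a *: u) = a * s w u.
Proof. by rewrite linearZr_LR. Qed.
Lemma sNl u w : s (- u) w = - s u w.
Proof. by rewrite linearNl. Qed.
Lemma sNr u w : s w (- u) = - s w u.
Proof. by rewrite linearNr. Qed.
Lemma s0l w : s 0 w = 0. Proof. by rewrite linear0l. Qed.
Lemma s0r w : s w 0 = 0. Proof. by rewrite linear0r. Qed.
Lemma s_suml I r (P : pred I) (E : I -> vT) w :
  s (\sum_(i <- r | P i) E i) w = \sum_(i <- r | P i) s (E i) w.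
Proof. exact: (big_morph (s^~ w) (fun u v => sDl u v w) (s0l w)). Qed.
Lemma s_sumr I r (P : pred I) (E : I -> vT) w :
  s w (\sum_(i <- r | P i) E i) = \sum_(i <- r | P i) s w (E i).
Proof. exact: (big_morph (s w) (fun u v => sDr u v w) (s0r w)). Qed.
Lemma perpP (U : {vspace vT}) v : reflect (forall u, u \in U -> s u v = 0) (v \in perp s U).
Proof.
rewrite memvE; apply: (iffP subv_bigcapP) => [H u Uu|H i _].
  rewrite (coord_vbasis Uu) s_suml big1 // => i _.
  have := H i isT; rewrite -memvE memv_ker lfunE /= => /eqP; rewrite (tnth_nth 0) => H0.
  by rewrite sZl H0 mulr0.

by rewrite -memvE memv_ker lfunE /= H // (tnth_nth 0) vbasis_mem // mem_nth // size_tuple.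
Qed.
Hypothesis alt : forall v, s v v = 0.
Lemma skew u v : s u v = - s v u.
Proof.
have := alt (u + v); rewrite sDl !sDr !alt add0r addr0 => /eqP.
by rewrite addr_eq0 => /eqP.
Qed.

Definition gram (i j : nat) : F :=
  if ~~ odd i && (j == i.+1) then 1
  else if ~~ odd j && (i == j.+1) then -1 else 0.

Lemma gramN i j : gram j i = - gram i j.
Proof.
rewrite /gram; do !case: ifP; rewrite ?opprK ?oppr0 //.
all: try by move=> /andP[_ /eqP] -> /andP[_ /eqP] /n_Sn.
all: try by move=> /andP[_ /eqP] -> _ /andP[_ /eqP] /n_Sn.
all: try by move=> _ /andP[? ?] _ /andP[? ?]; congruence.
all: try by move=> _ /andP[? /eqP ->]; rewrite eqxx /= => ->.
by move=> /andP[_ /eqP ->] /andP[_ /eqP]; lia.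
Qed.

Lemma gramii i : gram i i = 0.
Proof. by rewrite /gram (_ : (i == i.+1) = false) ?andbF //; apply/eqP; lia. Qed.

Definition stdb (bs : seq vT) :=
  forall i j, (i < size bs)%N -> (j < size bs)%N -> s bs`_i bs`_j = gram i j.
Lemma dbl_eq i k : (k.*2 == i.*2) = (i == k).
Proof. by apply/idP/idP => /eqP H; apply/eqP; lia. Qed.
Lemma gram_eo i k : gram i.*2 (k.*2).+1 = (i == k)%:R.
Proof. by rewrite /gram odd_double /= eqSS dbl_eq odd_double /=; case: (i == k). Qed.
Lemma gram_oe i k : gram (i.*2).+1 k.*2 = - (i == k)%:R.
Proof. by rewrite gramN gram_eo eq_sym. Qed.
Lemma gram_ee i k : gram i.*2 k.*2 = 0.
Proof.
rewrite /gram odd_double /= (_ : (k.*2 == i.*2.+1) = false); last by apply/eqP; lia.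
by rewrite (_ : (i.*2 == k.*2.+1) = false) ?andbF //; apply/eqP; lia.
Qed.
Lemma gram_oo i k : gram (i.*2).+1 (k.*2).+1 = 0.
Proof. by rewrite /gram /= !odd_double /=. Qed.

Lemma sum_delta h m (a : nat -> F) : (m < h)%N ->
  \sum_(0 <= k < h) ((m == k)%:R * a k) = a m.
Proof.
move=> mh; transitivity (\sum_(0 <= k < h | k == m) a k).
  by rewrite [RHS]big_mkcond /=; apply: eq_bigr => k _; rewrite eq_sym; case: eqP; rewrite ?mul1r ?mul0r.
by rewrite big_nat1_eq leq0n mh.
Qed.

Lemma span_orth bs v : (forall i, (i < size bs)%N -> s bs`_i v = 0) ->
  forall x, x \in <<bs>>%VS -> s x v = 0.
Proof.
move=> H x xin; rewrite (coord_span (X := in_tuple bs) xin).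
by rewrite s_suml big1 // => i _; rewrite sZl H ?mulr0.
Qed.

Lemma stdb_rcons bs w : stdb bs ->
  (forall i, (i < size bs)%N -> s bs`_i w = gram i (size bs)) -> stdb (rcons bs w).
Proof.
move=> Hb Hw i j; rewrite size_rcons !ltnS !nth_rcons.
case: (ltngtP i (size bs)) => [ilt|//|ieq] _; case: (ltngtP j (size bs)) => [jlt|//|jeq] _.
- by rewrite Hb.
- by rewrite jeq ?eqxx Hw.
- by rewrite ieq ?eqxx skew Hw // gramN opprK.
- by rewrite ieq jeq ?eqxx alt gramii.
Qed.

Lemma half_lt k n : (k < n./2)%N -> (k.*2.+1 < n)%N.
Proof. move=> kh; rewrite -[n]odd_double_half; case: (odd n) => /=; lia. Qed.

Definition proj bs w := w - \sum_(0 <= k < (size bs)./2)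
  (s bs`_(k.*2) w *: bs`_(k.*2).+1 - s bs`_(k.*2).+1 w *: bs`_(k.*2)).

Lemma proj_in bs w : proj bs w - w \in <<bs>>%VS.
Proof.
rewrite /proj addrAC subrr add0r rpredN big_nat_cond rpred_sum // => k /andP[/andP[_ kh] _].
have := half_lt kh => kh2.
by apply: rpredB; apply: rpredZ; apply: memv_span; apply: mem_nth => //; apply: ltnW.
Qed.

Lemma s_proj bs w i : stdb bs -> (i < size bs)%N ->
  s bs`_i (proj bs w) = s bs`_i w - \sum_(0 <= k < (size bs)./2)
     (s bs`_(k.*2) w * gram i (k.*2).+1 - s bs`_(k.*2).+1 w * gram i k.*2).
Proof.
move=> Hb il; rewrite /proj sDr sNr s_sumr; congr (_ - _).
apply: eq_big_nat => k /andP[_ kh]; have := half_lt kh => kh2.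
by rewrite sDr sNr !sZr !Hb // ltnW.
Qed.

Lemma proj_orth bs w i : stdb bs -> (i < ((size bs)./2).*2)%N ->
  s bs`_i (proj bs w) = 0.
Proof.
move=> Hb il.
have ilt : (i < size bs)%N.
  by apply: (leq_trans il); rewrite -{2}[size bs]odd_double_half leq_addl.
rewrite s_proj //; apply/eqP; rewrite subr_eq0; apply/eqP.
have : (i./2 < (size bs)./2)%N by rewrite ltn_half_double.
rewrite -[in RHS](odd_double_half i) -[in LHS](odd_double_half i).
case: (odd i) => /= mh.
- under eq_bigr => k _ do rewrite gram_oo gram_oe mulr0 sub0r mulrN opprK mulrC.
  by rewrite sum_delta.
- under eq_bigr => k _ do rewrite gram_ee gram_eo mulr0 subr0 mulrC.
  by rewrite sum_delta.
Qed.

Lemma proj_last bs w : stdb bs -> odd (size bs) ->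
  s bs`_((size bs)./2.*2) (proj bs w) = s bs`_((size bs)./2.*2) w.
Proof.
move=> Hb os.
have ilt : ((size bs)./2.*2 < size bs)%N.
  by rewrite -{2}[size bs]odd_double_half os.
rewrite s_proj // big_nat_cond big1 ?subr0 // => k /andP[/andP[_ kh] _].
by rewrite gram_ee gram_eo (_ : (_ == k) = false) ?mulr0 ?subr0 //; apply/eqP; lia.
Qed.

Lemma gram_lt_e i j : (i < j.*2)%N -> gram i j.*2 = 0.
Proof.
move=> ij; rewrite /gram (_ : (i == j.*2.+1) = false) ?andbF; last by apply/eqP; lia.
case: eqP => [e|_]; last by rewrite andbF.
have : odd j.*2 = odd i.+1 by rewrite e.
by rewrite odd_double /= => /esym/negbFE ->.
Qed.

Lemma gram_lt_o i j : (i < j.*2)%N -> gram i j.*2.+1 = 0.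
Proof.
move=> ij; rewrite /gram (_ : (i == j.*2.+2) = false) ?andbF; last by apply/eqP; lia.
by rewrite (_ : (j.*2.+1 == i.+1) = false) ?andbF //; apply/eqP; lia.
Qed.

Lemma subvPn (Z U : {vspace vT}) : ~~ (Z <= U)%VS -> exists2 w, w \in Z & w \notin U.
Proof.
move=> H; apply: NNPP => H2; move/negP: H; apply; apply/subvP => w wZ.
by apply: NNPP => wn; apply: H2; exists w => //; apply/negP.
Qed.

Lemma memRad Z v : v \in Rad s Z -> forall u, u \in Z -> s u v = 0.
Proof. by rewrite memv_cap => /andP[_ /perpP]. Qed.

Lemma span_rcons (bs : seq vT) (w : vT) : (<<rcons bs w>> = <<bs>> + <[w]>)%VS.
Proof. by rewrite -cats1 span_cat span_seq1. Qed.

Lemma free_rcons (bs : seq vT) (w : vT) : free (rcons bs w) = (w \notin <<bs>>%VS) && free bs.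
Proof. by rewrite (@perm_free _ _ _ (w :: bs)) ?free_cons // perm_rcons. Qed.

Lemma proj_Z bs w Z : (<<bs>> <= Z)%VS -> w \in Z -> proj bs w \in Z.
Proof.
move=> bsZ wZ; rewrite -[proj bs w](subrK w) rpredD //.
exact: (subvP bsZ _ (proj_in bs w)).
Qed.

Lemma proj_notin bs w U : (<<bs>> <= U)%VS -> w \notin U -> proj bs w \notin U.
Proof.
move=> bsU; apply: contra => pU; have := rpredB pU (subvP bsU _ (proj_in bs w)).
by rewrite opprB addrC subrK.
Qed.

Lemma stepA Z bs : stdb bs -> free bs -> (<<bs>> <= Z)%VS ->
  (<<bs>> :&: Rad s Z = 0)%VS -> <<bs>>%VS != Z -> (\dim (Rad s Z) <= 1)%N ->
  exists w, [/\ stdb (rcons bs w), free (rcons bs w), (<<rcons bs w>> <= Z)%VS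
    & ((<<rcons bs w>> :&: Rad s Z = 0)%VS \/ <<rcons bs w>>%VS = Z)].
Proof.
move=> Hb Hf bsZ Hcap neZ Hrad.
have dbs : \dim <<bs>> = size bs by apply/eqP.
have dlt : (size bs < \dim Z)%N by move: neZ; rewrite eqEdim bsZ /= -ltnNge dbs.
set h := (size bs)./2.
have Hsz := odd_double_half (size bs).
case: (boolP (odd (size bs))) => os.
- set r := bs`_(h.*2).
  have Hsz' : size bs = (h.*2).+1 by move: Hsz; rewrite os /=; lia.
  have hl : (h.*2 < size bs)%N by rewrite Hsz'.
  have rbs : r \in <<bs>>%VS by apply/memv_span/mem_nth.
  have r0 : r != 0 by apply: (free_not0 Hf); apply: mem_nth.
  have rperp : forall x, x \in <<bs>>%VS -> s x r = 0.
    apply: span_orth => i il; rewrite Hb //.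
    case: (ltngtP i h.*2) il => [ilt|hi|->] il; first exact: gram_lt_e.
      by move: il; rewrite Hsz'; lia.
    exact: gramii.
  have [u uZ su] : exists2 u, u \in Z & s r u != 0.
    apply: NNPP => H.
    have rR : r \in Rad s Z.
      rewrite memv_cap (subvP bsZ _ rbs) /=; apply/perpP => u uZ.
      apply/eqP; apply: NNPP => nz; apply: H; exists u => //.
      by rewrite skew oppr_eq0; apply/negP.
    have : r \in (<<bs>> :&: Rad s Z)%VS by rewrite memv_cap rbs.
    by rewrite Hcap memv0 (negbTE r0).
  set wp := proj bs ((s r u)^-1 *: u).
  have srw : s r wp = 1 by rewrite /wp /r proj_last // sZr mulVf.
  have wpZ : wp \in Z by apply: proj_Z => //; rewrite memvZ.
  have wpn : wp \notin <<bs>>%VS.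
    by apply/negP => wi; have := rperp _ wi; rewrite skew srw => /eqP; rewrite oppr_eq0 oner_eq0.
  exists wp; split.
  + apply: stdb_rcons => // i il; rewrite Hsz'.
    case: (ltngtP i h.*2) il => [ilt|hi|->] il.
    * by rewrite proj_orth // gram_lt_o.
    * by move: il; rewrite Hsz'; lia.
    * by rewrite srw gram_eo eqxx.
  + by rewrite free_rcons wpn Hf.
  + by rewrite span_rcons subv_add bsZ -memvE wpZ.
  + left; apply/eqP; rewrite -subv0; apply/subvP => v.
    rewrite memv_cap span_rcons => /andP[/memv_addP[x xi [y /vlineP[c ->] ->]] vR].
    have := memRad vR (subvP bsZ _ rbs).
    rewrite sDr sZr srw mulr1 skew rperp // oppr0 add0r => c0.
    rewrite c0 scale0r addr0 in vR *.
    have : x \in (<<bs>> :&: Rad s Z)%VS by rewrite memv_cap xi vR.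
    by rewrite Hcap.
- have Hsz' : size bs = h.*2 by move: Hsz; rewrite (negbTE os) /=; lia.
  have [w wZ wn] : exists2 w, w \in Z & (w \notin (<<bs>> + Rad s Z)%VS) ||
      ((\dim Z == (size bs).+1) && (w \notin <<bs>>%VS)).
    case: (boolP (Z <= <<bs>> + Rad s Z)%VS) => HZ.
    + have : ~~ (Z <= <<bs>>)%VS.
        by apply: contra neZ => Zb; rewrite eqEsubv bsZ Zb.
      case/subvPn => w wZ wn; exists w => //; apply/orP; right; rewrite wn andbT.
      have := dimvS HZ; have := dimv_sum_cap <<bs>>%VS (Rad s Z); rewrite dbs.
      by move=> h1 h2; apply/eqP; lia.
    + by case/subvPn: HZ => w wZ wn; exists w => //; rewrite wn.
  have wn' : w \notin <<bs>>%VS.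
    case/orP: wn => [|/andP[_ //]]; apply: contra; exact: (subvP (addvSl _ _)).
  set wp := proj bs w.
  have wpZ : wp \in Z by apply: proj_Z.
  have wpn : wp \notin <<bs>>%VS by apply: proj_notin.
  have fr : free (rcons bs wp) by rewrite free_rcons wpn Hf.
  have sZ : (<<rcons bs wp>> <= Z)%VS by rewrite span_rcons subv_add bsZ -memvE wpZ.
  exists wp; split => //.
  + apply: stdb_rcons => // i il.
    have ih : (i < h.*2)%N by rewrite -Hsz'.
    by rewrite proj_orth // Hsz' gram_lt_e.
  + case/orP: wn => [wn2|/andP[/eqP dZ _]].
    * left; apply/eqP; rewrite -subv0; apply/subvP => v.
      rewrite memv_cap span_rcons => /andP[/memv_addP[x xi [y /vlineP[c ->] ->]] vR].
      have [c0|c0] := eqVneq c 0.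
        rewrite c0 scale0r addr0 in vR *.
        have : x \in (<<bs>> :&: Rad s Z)%VS by rewrite memv_cap xi vR.
        by rewrite Hcap.
      exfalso; move: (proj_notin (addvSl _ (Rad s Z)) wn2); rewrite -/wp; apply/negP/negPn.
      have -> : wp = c^-1 *: ((x + c *: wp) - x).
        by rewrite addrAC subrr add0r scalerA mulVf // scale1r.
      rewrite memvZ // rpredB //; first exact: (subvP (addvSr _ _)).
      exact: (subvP (addvSl _ _)).
    * right; apply/eqP; rewrite eqEdim sZ (eqP fr) size_rcons dZ leqnn.
      done.
Qed.

Lemma extendA k : forall Z bs, (\dim Z - size bs <= k)%N -> stdb bs -> free bs ->
  (<<bs>> <= Z)%VS -> ((<<bs>> :&: Rad s Z = 0)%VS \/ <<bs>>%VS = Z) ->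
  (\dim (Rad s Z) <= 1)%N ->
  exists cs, [/\ stdb (bs ++ cs), free (bs ++ cs) & <<bs ++ cs>>%VS = Z].
Proof.
elim: k => [|k IH] Z bs hk Hb Hf bsZ Hc Hr.
all: have [eqZ|neZ] := eqVneq <<bs>>%VS Z; first by exists [::]; rewrite cats0.
all: have Hc' : (<<bs>> :&: Rad s Z = 0)%VS by case: Hc => // eq; rewrite eq eqxx in neZ.
all: have dlt : (size bs < \dim Z)%N by move: neZ; rewrite eqEdim bsZ /= -ltnNge (eqP Hf).
  by lia.
have [w [Hb' Hf' sZ Hc'']] := stepA Hb Hf bsZ Hc' neZ Hr.
have [|cs [H1 H2 H3]] := IH Z (rcons bs w) _ Hb' Hf' sZ Hc'' Hr.
  by rewrite size_rcons; lia.
by exists (w :: cs); rewrite -cat_rcons.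
Qed.

Lemma min_ex (Q : nat -> Prop) : (exists d, Q d) ->
  exists d, Q d /\ forall e, Q e -> (d <= e)%N.
Proof.
move=> [d Qd]; elim/ltn_ind: d Qd => d IHd Qd.
case: (classic (exists e, Q e /\ (e < d)%N)) => [[e [Qe ed]]|H].
  exact: IHd e ed Qe.
exists d; split => // e Qe; rewrite leqNgt; apply/negP => ed; apply: H; by exists e.
Qed.

Lemma stdb_nil : stdb [::]. Proof. by []. Qed.

Lemma flag_basis P : is_flag s P -> (\dim (Rad s fullv) <= 1)%N ->
  exists bs, [/\ stdb bs, free bs, <<bs>>%VS = fullv &
    forall X, P X -> X = <<take (\dim X) bs>>%VS].
Proof.
move=> [Pobj Pinc] Hr.
have dimP : forall X, P X -> (0 < \dim X)%N /\ (\dim X < \dim {:vT})%N.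
  by move=> X /Pobj [i [/andP[i1 i2] -> _ _]]; split; lia.
suff H : forall k bs, (\dim {:vT} - size bs <= k)%N -> stdb bs -> free bs ->
    (<<bs>>%VS = 0%VS \/ P <<bs>>%VS) ->
    (forall X, P X -> (\dim X <= size bs)%N -> X = <<take (\dim X) bs>>%VS) ->
    exists bs', [/\ stdb bs', free bs', <<bs'>>%VS = fullv &
      forall X, P X -> X = <<take (\dim X) bs'>>%VS].
  apply: (H _ [::] (leqnn _)) => //.
  - by rewrite /free span_nil dimv0.
  - by left; rewrite span_nil.
  - by move=> X /dimP [d0 _]; rewrite /= leqNgt d0.
elim=> [|k IH] bs hk Hb Hf Hst Hinv.
all: case: (classic (exists X, P X /\ (size bs < \dim X)%N)) => [Hex|Hnex].
- case: Hex => X [/dimP [_ dX] sX]; by lia.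
- have [|cs [H1 H2 H3]] := @extendA (\dim {:vT} - size bs) fullv bs (leqnn _) Hb Hf (subvf _) _ Hr.
    case: Hst => [->|/Pobj [i [_ _ Hi _]]]; last by left.
    by left; rewrite cap0v.
  exists (bs ++ cs); split => // X PX.
  have dX : (\dim X <= size bs)%N.
    by rewrite leqNgt; apply/negP => lt; apply: Hnex; exists X.
  by rewrite takel_cat // -Hinv.
- have Hex' : exists d, exists X, [/\ P X, (size bs < \dim X)%N & \dim X = d].
    by case: Hex => X [PX lt]; exists (\dim X), X.
  have [d [[Z [PZ Zlt dZ]] dmin]] := min_ex Hex'.
  have Zmin : forall X, P X -> (size bs < \dim X)%N -> (\dim Z <= \dim X)%N.
    by move=> X PX lt; rewrite dZ; apply: dmin; exists X.
  have dbs : \dim <<bs>> = size bs by apply/eqP.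
  have [bsZ Hc] : (<<bs>> <= Z)%VS /\ ((<<bs>> :&: Rad s Z = 0)%VS \/ <<bs>>%VS = Z).
    case: Hst => [->|Pb]; first by split; [exact: sub0v | left; rewrite cap0v].
    case: (Pinc _ _ Pb PZ) => [eq|[H1 H2]|[H1 _]].
    + by move: Zlt; rewrite -eq dbs ltnn.
    + by split; [|left].
    + by move: (dimvS H1); rewrite dbs; lia.
  have HrZ : (\dim (Rad s Z) <= 1)%N by case: (Pobj _ PZ) => i [_ _ _ ->].
  have [cs [H1 H2 H3]] := @extendA _ Z bs (leqnn _) Hb Hf bsZ Hc HrZ.
  have dZs : \dim Z = size (bs ++ cs) by rewrite -H3; apply/eqP.
  apply: (IH (bs ++ cs)) => //.
  + by move: (dimP _ PZ) => [_ ?]; lia.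
  + by right; rewrite H3.
  + move=> X PX dX; case: (leqP (\dim X) (size bs)) => dXb.
      by rewrite takel_cat // -Hinv.
    have ZX := Zmin X PX dXb.
    have eXZ : X = Z.
      case: (Pinc _ _ PX PZ) => [//|[XZ _]|[ZX' _]].
      * by apply/eqP; rewrite eqEdim XZ /=; lia.
      * by apply/esym/eqP; rewrite eqEdim ZX' /=; lia.
    by rewrite eXZ dZs take_size.
- have [|cs [H1 H2 H3]] := @extendA (\dim {:vT} - size bs) fullv bs (leqnn _) Hb Hf (subvf _) _ Hr.
    case: Hst => [->|/Pobj [i [_ _ Hi _]]]; last by left.
    by left; rewrite cap0v.
  exists (bs ++ cs); split => // X PX.
  have dX : (\dim X <= size bs)%N.
    by rewrite leqNgt; apply/negP => lt; apply: Hnex; exists X.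
  by rewrite takel_cat // -Hinv.
Qed.
End S.

Section Iso.
Variables (F : fieldType) (vT : vectType F).

Definition gmap n (tb tb' : n.-tuple vT) (v : vT) : vT :=
  \sum_(i < n) coord tb i v *: tb'`_i.

Lemma gmap_lin n (tb tb' : n.-tuple vT) : linear (gmap tb tb').
Proof.
move=> a u v; rewrite /gmap scaler_sumr -big_split; apply: eq_bigr => i _ /=.
by rewrite linearP scalerDl scalerA.
Qed.

HB.instance Definition _ n (tb tb' : n.-tuple vT) :=
  GRing.isLinear.Build F vT vT *:%R (gmap tb tb') (gmap_lin tb tb').

Lemma gmap_basis n (tb tb' : n.-tuple vT) (j : 'I_n) : free tb ->
  gmap tb tb' tb`_j = tb'`_j.
Proof.
move=> Hf; rewrite /gmap (bigD1 j) //= coord_free // eqxx scale1r big1 ?addr0 //.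
by move=> i ij; rewrite coord_free // eq_sym (negbTE ij) scale0r.
Qed.
End Iso.

Section Main.
Variables (F : fieldType) (vT : vectType F) (s : {biscalar vT}).
Hypothesis alt : forall v, s v v = 0.

Lemma gram_expand n (tb : n.-tuple vT) (a c : 'I_n -> F) : stdb s tb ->
  s (\sum_i a i *: tb`_i) (\sum_j c j *: tb`_j) =
  \sum_i \sum_j (a i * c j * gram F i j).
Proof.
move=> Hb; rewrite s_suml; apply: eq_bigr => i _; rewrite s_sumr.
by apply: eq_bigr => j _; rewrite sZl sZr Hb ?size_tuple ?ltn_ord // mulrA.
Qed.

Lemma iso_exists (b b' : seq vT) : stdb s b -> stdb s b' -> free b -> free b' ->
  <<b>>%VS = fullv -> <<b'>>%VS = fullv -> size b = size b' ->
  exists g, in_Sp s g /\ forall i, (g @: <<take i b>> = <<take i b'>>)%VS.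
Proof.
move=> Hb Hb' Hf Hf' Hs Hs' sz.
have sb : size b' == size b by rewrite sz.
pose tb := in_tuple b; pose tb' := Tuple sb.
have gb : forall j : 'I_(size b), gmap tb tb' b`_j = b'`_j.
  by move=> j; exact: (@gmap_basis _ _ _ tb tb' j Hf).
have espan : forall v, v = \sum_i coord tb i v *: tb`_i.
  by move=> v; apply: coord_span; rewrite /= Hs memvf.
exists (linfun (gmap tb tb')); split; first split.
- apply/eqP; rewrite -subv0; apply/subvP => v; rewrite memv_ker lfunE /= memv0 => /eqP H.
  rewrite (espan v) big1 // => i _.
  by rewrite (elimT (@freeP _ _ (size b) tb') Hf' _ H) scale0r.
- apply/eqP; rewrite eqEsubv subvf /= -[X in (X <= _)%VS]Hs'; apply/span_subvP => x /(nthP 0) [j jl <-].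
  rewrite -sz in jl; rewrite -(gb (Ordinal jl)) -(lfunE (gmap tb tb')).
  by apply: memv_img; apply: memvf.
- move=> u v; rewrite !lfunE /= /gmap.
  transitivity (s (\sum_i coord tb i u *: tb`_i) (\sum_j coord tb j v *: tb`_j));
    last by rewrite -!espan.
  by rewrite !gram_expand.
- move=> i; rewrite limg_span map_take; congr (<< take i _ >>)%VS.
  apply: (@eq_from_nth _ 0); rewrite size_map // => j jl.
  by rewrite (nth_map 0) // lfunE /= (gb (Ordinal jl)).
Qed.
End Main.

Theorem lemma5p1 (F : fieldType) (vT : vectType F) (n : nat)
  (s : {biscalar vT}) :
  \dim {:vT} = n ->
  (forall v : vT, s v v = 0) ->
  (\dim (Rad s fullv) <= 1)%N ->
  Sp_flag_transitive s.
Proof.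
move=> dimn alt Hr J HJ P Q fP tP fQ tQ.
have [b [Hb Hf Hs HP]] := flag_basis alt fP Hr.
have [b' [Hb' Hf' Hs' HQ]] := flag_basis alt fQ Hr.
have sz : size b = size b' by rewrite -(eqP Hf) -(eqP Hf') Hs Hs'.
have [g [gSp gimg]] := iso_exists Hb Hb' Hf Hf' Hs Hs' sz.
exists g; split => // Y; split.
- case=> X PX ->.
  have [i Xi] := fP.1 X PX.
  have Ji : J i by apply/(tP i); exists X.
  have [X' QX' X'i] := (tQ i).1 Ji.
  case: Xi => _ dX _ _; case: X'i => _ dX' _ _.
  by rewrite (HP _ PX) gimg dX -dX' -HQ.
- move=> QY.
  have [i Yi] := fQ.1 Y QY.
  have Ji : J i by apply/(tQ i); exists Y.
  have [X PX Xi] := (tP i).1 Ji.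
  exists X => //.
  case: Xi => _ dX _ _; case: Yi => _ dY _ _.
  by rewrite (HP _ PX) gimg dX -dY -HQ.
Qed.
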